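(* If the starvation number of an SCS with $n$ robots is $s$, then the $s$-resilience of the system is $n-s$.
   Context: Let $T=\{C_1,\dots,C_n\}$ be pairwise disjoint unit circles in the plane (trajectories) and $\epsilon<0.5$ a communication range. The graph of potential links $G_\epsilon(T)$ has the circle centers as nodes and an edge $\{i,j\}$ whenever the centers of $C_i,C_j$ are at distance at most $2+\epsilon$; it is assumed connected. Points of a circle are identified with angles (modulo $2\pi$), and a robot traverses a circle in one time unit. A schedule is a pair $(f,g)$, $f:T\to[0,2\pi)$, $g:T\to\{-1,1\}$ ($1$ = counterclockwise); the robot on $C_i$ is at angle $f(C_i)+2\pi g(C_i)t$ at time $t$. A communication graph $G=(V,E)$ is a connected spanning subgraph of $G_\epsilon(T)$. The link position $\phi_{ij}$ is the point of $C_i$ closest to $C_j$. A schedule is $G$-synchronized if for every $\{i,j\}\in E$ the robot on $C_i$ is at $\phi_{ij}$ exactly when the robot on $C_j$ is at $\phi_{ji}$. An SCS with communication graph $G$ consists of $n$ robots, one per circle, moving under a $G$-synchronized schedule with $g(C_i)=-g(C_j)$ for all $\{i,j\}\in E$. Shifting protocol: when a robot on $C_i$ reaches $\phi_{ij}$ and there is no robot at $\phi_{ji}$, it moves to $C_j$ and thereafter follows the schedule of $C_j$. A partial SCS is obtained by removing some robots, the rest applying the shifting protocol. A surviving robot starves if every time it arrives at a link position the corresponding neighbor is absent. The $k$-resilience ($k\ge1$) is the minimum number of robots whose removal may cause at least $k$ surviving robots to starve ($\infty$ if impossible). The starvation number is the maximum possible number of starving robots in a partial SCS obtained from the SCS.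 *)

(* Defs.v *)
From mathcomp Require Import all_boot.
From Stdlib Require Import Reals.

Set Implicit Arguments.
Unset Strict Implicit.
Unset Printing Implicit Defensive.

Local Open Scope R_scope.

(* Data of a synchronized communication system (SCS) with n robots / circles.
   Circle C_i is the unit circle centred at (cx i, cy i).  The point of C_i
   with angle a is (cx i + cos a, cy i + sin a). *)
Record scs_data (n : nat) := SCSData {
  cx   : 'I_n -> R;
  cy   : 'I_n -> R;
  eps  : R;                  (* communication range *)
  comm : rel 'I_n;           (* edge relation of the communication graph G *)
  sf   : 'I_n -> R;          (* f(C_i) : starting angle *)
  sg   : 'I_n -> R           (* g(C_i) in {-1, 1}, 1 = counterclockwise *)
}.

Section Defs.
Variable n : nat.
Variable D : scs_data n.

Definition dist (i j : 'I_n) : R :=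
  sqrt ((cx D j - cx D i) ^ 2 + (cy D j - cy D i) ^ 2).

Definition circ_pt (i : 'I_n) (a : R) : R * R :=
  (cx D i + cos a, cy D i + sin a).

(* link position phi_ij : the point of C_i closest to C_j *)
Definition link (i j : 'I_n) : R * R :=
  (cx D i + (cx D j - cx D i) / dist i j, cy D i + (cy D j - cy D i) / dist i j).

Definition sched_pt (i : 'I_n) (t : R) : R * R :=
  circ_pt i (sf D i + 2 * PI * sg D i * t).

Definition potential_link (i j : 'I_n) : Prop := i <> j /\ dist i j <= 2 + eps D.

Definition is_SCS : Prop :=
  (forall i j : 'I_n, i <> j -> 2 < dist i j) /\
  0 < eps D < 1/2 /\
  (forall i j, comm D i j = comm D j i) /\
  (forall i, ~~ comm D i i) /\
  (forall i j, comm D i j -> potential_link i j) /\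
  (forall i j, connect (comm D) i j) /\
  (forall i, 0 <= sf D i < 2 * PI) /\
  (forall i, sg D i = 1 \/ sg D i = -1) /\
  (forall i j, comm D i j -> forall t : R,
      sched_pt i t = link i j <-> sched_pt j t = link j i) /\
  (forall i j, comm D i j -> sg D i = - sg D j).

(* ---- Partial SCS and the shifting protocol ----
   Robots are named by the circle they start on.  [S] is the set of removed
   robots; the surviving robots are those not in [S].  An execution
   [pos : 'I_n -> R -> 'I_n] gives, for each robot r and time t >= 0, the
   circle the robot is on at time t (after the shifts happening at time t);
   on circle i the robot follows the schedule of C_i, i.e. it is at
   [sched_pt i t]. *)

Definition alive (S : {set 'I_n}) (r : 'I_n) : Prop := r \notin S.

Definition before (pos : 'I_n -> R -> 'I_n) (r : 'I_n) (t : R) (c : 'I_n) : Prop :=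
  (t = 0 /\ c = r) \/
  (0 < t /\ exists d, 0 < d /\ forall t', t - d < t' < t -> pos r t' = c).

Definition shift_cond (S : {set 'I_n}) (b : 'I_n -> 'I_n) (r : 'I_n) (t : R)
    (j : 'I_n) : Prop :=
  comm D (b r) j /\ sched_pt (b r) t = link (b r) j /\
  ~ (exists r', alive S r' /\ r' <> r /\ b r' = j /\ sched_pt j t = link j (b r)).

Definition step (S : {set 'I_n}) (b : 'I_n -> 'I_n) (r : 'I_n) (t : R)
    (c : 'I_n) : Prop :=
  (exists j, shift_cond S b r t j /\ c = j) \/
  ((forall j, ~ shift_cond S b r t j) /\ c = b r).

Definition execution (S : {set 'I_n}) (pos : 'I_n -> R -> 'I_n) : Prop :=
  (forall r, alive S r -> forall t, 0 <= t ->
     exists d, 0 < d /\ forall t', t <= t' < t + d -> pos r t' = pos r t) /\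
  (forall t, 0 <= t -> exists b : 'I_n -> 'I_n,
     (forall r, alive S r -> before pos r t (b r)) /\
     (forall r, alive S r -> step S b r t (pos r t))).

Definition starves (S : {set 'I_n}) (pos : 'I_n -> R -> 'I_n) (r : 'I_n) : Prop :=
  alive S r /\
  forall t, 0 <= t -> forall (i j r' : 'I_n),
    before pos r t i -> comm D i j -> sched_pt i t = link i j ->
    alive S r' -> r' <> r -> before pos r' t j -> sched_pt j t <> link j i.

Definition is_starvation_number (s : nat) : Prop :=
  (exists (S : {set 'I_n}) pos (K : {set 'I_n}),
     execution S pos /\ (#|K| = s)%nat /\ (forall r, r \in K -> starves S pos r)) /\
  (forall (S : {set 'I_n}) pos (K : {set 'I_n}),
     execution S pos -> (forall r, r \in K -> starves S pos r) -> (#|K| <= s)%nat).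

Definition is_resilience (k m : nat) : Prop :=
  (exists (S : {set 'I_n}) pos (K : {set 'I_n}),
     (#|S| = m)%nat /\ execution S pos /\ (k <= #|K|)%nat /\
     (forall r, r \in K -> starves S pos r)) /\
  (forall (S : {set 'I_n}) pos (K : {set 'I_n}),
     execution S pos -> (k <= #|K|)%nat -> (forall r, r \in K -> starves S pos r) ->
     (m <= #|S|)%nat).

End Defs.

(* Main.v *)
Require Import Defs.
From mathcomp Require Import all_boot.
From Stdlib Require Import Reals.
From Stdlib Require Import Lra Lia Classical ClassicalEpsilon.

Set Implicit Arguments.
Unset Strict Implicit.
Unset Printing Implicit Defensive.


Local Open Scope R_scope.

Section Geo.
Variable n : nat.
Variable D : scs_data n.
Hypothesis HS : is_SCS D.

Lemma comm_sym i j : comm D i j -> comm D j i.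
Proof. case: HS => _ [_ [H _]]; by rewrite H. Qed.

Lemma comm_neq i j : comm D i j -> i <> j.
Proof. case: HS => _ [_ [_ [H _]]] Hc E; subst; by move: (H j); rewrite Hc. Qed.

Lemma sync i j t : comm D i j -> sched_pt D i t = link D i j -> sched_pt D j t = link D j i.
Proof. move=> Hc; case: HS => _ [_ [_ [_ [_ [_ [_ [_ [H _]]]]]]]]; by apply (H i j Hc t). Qed.

Lemma sg_pm i : sg D i = 1 \/ sg D i = -1.
Proof. case: HS => _ [_ [_ [_ [_ [_ [_ [H _]]]]]]]; exact: H. Qed.

Lemma dist_bounds i j : comm D i j -> 2 < Defs.dist D i j <= 2 + 1/2.
Proof.
move=> Hc. case: HS => Hd [He [_ [_ [Hp _]]]].
case: (Hp i j Hc) => Hne Hle. have := Hd i j Hne. lra.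
Qed.

Lemma link_inj c j j' : comm D c j -> comm D c j' -> link D c j = link D c j' -> j = j'.
Proof.
move=> Hj Hj' E. apply: NNPP => Hne.
case: HS => Hd _. have Hdd := Hd j j' Hne.
have [Hb1 Hb2] := dist_bounds Hj. have [Hb1' Hb2'] := dist_bounds Hj'.
move: Hdd Hb1 Hb2 Hb1' Hb2' E. rewrite /link /Defs.dist.
set a := cx D j - cx D c. set b := cy D j - cy D c.
set a' := cx D j' - cx D c. set b' := cy D j' - cy D c.
have -> : cx D j' - cx D j = a' - a by rewrite /a /a'; ring.
have -> : cy D j' - cy D j = b' - b by rewrite /b /b'; ring.
set d := sqrt (a ^ 2 + b ^ 2). set d' := sqrt (a' ^ 2 + b' ^ 2).
move=> Hdd Hb1 Hb2 Hb1' Hb2' [E1 E2].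
have Ex : a / d = a' / d' by lra.
have Ey : b / d = b' / d' by lra.
have Hdsq : d ^ 2 = a ^ 2 + b ^ 2 by rewrite /d pow2_sqrt; nra.
have Ea' : a' = a * d' / d.
  rewrite (_ : a * d' / d = (a / d) * d'); last by field; lra.
  rewrite Ex; field; lra.
have Eb' : b' = b * d' / d.
  rewrite (_ : b * d' / d = (b / d) * d'); last by field; lra.
  rewrite Ey; field; lra.
have Hsq : (a' - a) ^ 2 + (b' - b) ^ 2 = (d' - d) ^ 2.
  rewrite Ea' Eb'. have Hd0 : d <> 0 by lra.
  have -> : (a * d' / d - a) ^ 2 + (b * d' / d - b) ^ 2 = (a ^ 2 + b ^ 2) * ((d' - d) / d) ^ 2 by field.
  rewrite -Hdsq. field. lra.
move: Hdd. rewrite Hsq. rewrite -[(d' - d) ^ 2]Rsqr_pow2 sqrt_Rsqr_abs.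
move=> H. have : Rabs (d' - d) <= 1/2 by apply Rabs_le; lra. lra.
Qed.

Lemma trig_inj x y : cos x = cos y -> sin x = sin y -> exists k : Z, x - y = 2 * IZR k * PI.
Proof.
move=> Hc Hs.
have H1 : cos (x - y) = 1.
  rewrite cos_minus Hc Hs. have := sin2_cos2 y. rewrite /Rsqr. lra.
have H2 : sin ((x - y) / 2) = 0.
  have := cos_2a_sin ((x - y) / 2). have -> : 2 * ((x - y) / 2) = x - y by field.
  rewrite H1 => H. nra.
have [k Hk] := @sin_eq_0_0 _ H2. exists k. lra.
Qed.

Lemma arr_spacing c p t1 t2 : sched_pt D c t1 = p -> sched_pt D c t2 = p -> t1 < t2 -> t1 + 1 <= t2.
Proof.
move=> E1 E2 Hlt. rewrite -E2 /sched_pt /circ_pt in E1. case: E1 => Ec Es.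
have Ec' : cos (sf D c + 2 * PI * sg D c * t1) = cos (sf D c + 2 * PI * sg D c * t2) by lra.
have Es' : sin (sf D c + 2 * PI * sg D c * t1) = sin (sf D c + 2 * PI * sg D c * t2) by lra.
have [k Hk] := trig_inj Ec' Es'.
have HPI := PI_RGT_0.
have Hk' : sg D c * (t1 - t2) = IZR k.
  apply (Rmult_eq_reg_l (2 * PI)); [|lra]. rewrite -[2 * PI * IZR k]/(2 * PI * IZR k).
  have : 2 * IZR k * PI = 2 * PI * IZR k by ring. lra.
apply: Rnot_lt_le => Hlt2.
case: (sg_pm c) => Hsg; rewrite Hsg in Hk'.
- have h1 : IZR k < 0 by lra. have h2 : -1 < IZR k by lra.
  apply lt_IZR in h1. apply lt_IZR in h2. lia.
- have h1 : 0 < IZR k by lra. have h2 : IZR k < 1 by lra.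
  apply lt_IZR in h1. apply lt_IZR in h2. lia.
Qed.

End Geo.


Local Open Scope R_scope.

Lemma real_ind (a b : R) (P : R -> Prop) :
  (forall t, a <= t < b -> (forall t', a <= t' < t -> P t') -> P t) ->
  (forall t, a <= t < b -> P t -> exists d, 0 < d /\ forall t', t <= t' < t + d -> P t') ->
  forall t, a <= t < b -> P t.
Proof.
move=> R1 R2 t0 Ht0. apply: NNPP => HP.
pose E := fun x => a <= x <= t0 /\ forall t', a <= t' < x -> P t'.
have Eb : bound E by exists t0 => x [[_ h] _].
have Ea : exists x, E x by exists a; split; [lra| move=> t' ?; lra].
case: (@completeness E Eb Ea) => m [Hub Hlub].
have Ham : a <= m by apply Hub; split; [lra| move=> t' ?; lra].
have Hmt : m <= t0 by apply Hlub => x [[_ h] _].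
have Hbelow : forall t', a <= t' < m -> P t'.
  move=> t' Ht'. apply: NNPP => Hn.
  have : m <= t'. apply Hlub => x [[Hx1 Hx2] Hx].
    apply: Rnot_lt_le => Hlt. apply: Hn. apply Hx. lra.
  lra.
have Pm : P m by apply R1; [lra| exact Hbelow].
case: (Req_dec m t0) => Em; first by (apply HP; rewrite -Em).
have [d [Hd Hdp]] := R2 m ltac:(lra) Pm.
pose x := Rmin (m + d / 2) t0.
have : E x.
  split. rewrite /x. split. apply Rmin_glb; lra. apply Rmin_r.
  move=> t' Ht'. case: (Rlt_le_dec t' m) => h. apply Hbelow; lra.
  apply Hdp. split; first lra. have := Rmin_l (m + d / 2) t0. rewrite -/x. lra.
move/Hub. rewrite /x. move=> h. have : m < Rmin (m + d / 2) t0.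
  apply Rmin_glb_lt; lra.
lra.
Qed.

Section Next.
Variable n : nat.
Variable D : scs_data n.
Hypothesis HS : is_SCS D.

Definition arrives (c : 'I_n) (s : R) := exists j, comm D c j /\ sched_pt D c s = link D c j.

Lemma min_arr c t (l : seq 'I_n) :
  (forall j, j \in l -> forall s, t < s <= t + 1 -> ~ (comm D c j /\ sched_pt D c s = link D c j)) \/
  (exists j s, comm D c j /\ sched_pt D c s = link D c j /\ t < s <= t + 1 /\
     forall j', j' \in l -> forall s', t < s' < s -> ~ (comm D c j' /\ sched_pt D c s' = link D c j')).
Proof.
elim: l => [|j0 l IH]; first by left.
case: (classic (exists s0, t < s0 <= t + 1 /\ comm D c j0 /\ sched_pt D c s0 = link D c j0)) => [[s0 [Hs0 [Hc0 Hl0]]]|Hno].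
- case: IH => [IH|[j1 [s1 [Hc1 [Hl1 [Hs1 IH]]]]]].
  + right; exists j0, s0; do 3 (split=>//).
    move=> j'; rewrite in_cons => /orP [/eqP ->|Hj'] s' Hs' [Hc' Hl'].
    * have := arr_spacing HS Hl' Hl0 ltac:(lra). lra.
    * apply: (IH j' Hj' s') => //. lra.
  + case: (Rlt_le_dec s0 s1) => Hlt.
    * right; exists j0, s0; do 3 (split=>//).
      move=> j'; rewrite in_cons => /orP [/eqP ->|Hj'] s' Hs' [Hc' Hl'].
      -- have := arr_spacing HS Hl' Hl0 ltac:(lra). lra.
      -- apply: (IH j' Hj' s') => //. lra.
    * right; exists j1, s1; do 3 (split=>//).
      move=> j'; rewrite in_cons => /orP [/eqP ->|Hj'] s' Hs' [Hc' Hl'].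
      -- have := arr_spacing HS Hl' Hl0 ltac:(lra). lra.
      -- apply: (IH j' Hj' s') => //.
- case: IH => [IH|[j1 [s1 [Hc1 [Hl1 [Hs1 IH]]]]]].
  + left => j; rewrite in_cons => /orP [/eqP ->|Hj] s Hs [Hc Hl].
    * apply: Hno; by exists s.
    * by apply: (IH j Hj s).
  + right; exists j1, s1; do 3 (split=>//).
    move=> j'; rewrite in_cons => /orP [/eqP ->|Hj'] s' Hs' [Hc' Hl'].
    * apply: Hno; exists s'; split=>//; lra.
    * by apply: (IH j' Hj' s').
Qed.

Lemma next_ex c t : exists p : 'I_n * R, t < p.2 /\
  (forall s, t < s < p.2 -> ~ arrives c s) /\
  ((comm D c p.1 /\ sched_pt D c p.2 = link D c p.1) \/
   (p.1 = c /\ p.2 = t + 1 /\ ~ arrives c (t + 1))).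
Proof.
case: (min_arr c t (enum 'I_n)) => [H|[j [s [Hc [Hl [Hs H]]]]]].
- exists (c, t + 1) => /=. split; first lra. split.
  + move=> s Hs [j [Hc Hl]]. apply: (H j _ s) => //. by rewrite mem_enum. lra.
  + right; do 2 (split=>//). move=> [j [Hc Hl]]. apply: (H j _ (t+1)) => //. by rewrite mem_enum. lra.
- exists (j, s) => /=. split; first lra. split.
  + move=> s' Hs' [j' [Hc' Hl']]. by apply: (H j' _ s') => //; rewrite mem_enum.
  + by left.
Qed.

Lemma init_ex v : exists c, (comm D v c /\ sched_pt D v 0 = link D v c) \/ (c = v /\ ~ arrives v 0).
Proof.
case: (classic (arrives v 0)) => [[j Hj]|Hn]; first by exists j; left.
by exists v; right.
Qed.

End Next.


Local Open Scope R_scope.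

Lemma before_uniq n (pos : 'I_n -> R -> 'I_n) r t c1 c2 :
  before pos r t c1 -> before pos r t c2 -> c1 = c2.
Proof.
case=> [[-> ->]|[Ht [d1 [Hd1 H1]]]]; case=> [[Ht' ->]|[Ht' [d2 [Hd2 H2]]]] //; try lra.
pose t' := t - Rmin d1 d2 / 2.
have h1 := Rmin_l d1 d2. have h2 := Rmin_r d1 d2. have h3 : 0 < Rmin d1 d2 by apply Rmin_glb_lt.
rewrite -(H1 t') -?(H2 t') //; rewrite /t'; lra.
Qed.

Section Phi.
Variable n : nat.
Variable D : scs_data n.
Hypothesis HS : is_SCS D.
Variable v : 'I_n.

Definition nxt (c : 'I_n) (t : R) : 'I_n * R :=
  proj1_sig (constructive_indefinite_description _ (next_ex HS c t)).

Lemma nxt_spec c t : t < (nxt c t).2 /\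
  (forall s, t < s < (nxt c t).2 -> ~ arrives D c s) /\
  ((comm D c (nxt c t).1 /\ sched_pt D c (nxt c t).2 = link D c (nxt c t).1) \/
   ((nxt c t).1 = c /\ (nxt c t).2 = t + 1 /\ ~ arrives D c (t + 1))).
Proof. rewrite /nxt. by case: constructive_indefinite_description. Qed.

Definition c0 : 'I_n := proj1_sig (constructive_indefinite_description _ (init_ex D v)).

Lemma c0_spec : (comm D v c0 /\ sched_pt D v 0 = link D v c0) \/ (c0 = v /\ ~ arrives D v 0).
Proof. rewrite /c0. by case: constructive_indefinite_description. Qed.

Fixpoint st (k : nat) : 'I_n * R :=
  match k with 0 => (c0, 0) | k'.+1 => nxt (st k').1 (st k').2 end.

Definition cc k := (st k).1.
Definition T k := (st k).2.

Lemma T0 : T 0 = 0. Proof. by []. Qed.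
Lemma cc0 : cc 0 = c0. Proof. by []. Qed.

Lemma T_step k : T k < T k.+1.
Proof. rewrite /T /=. by case: (nxt_spec (st k).1 (st k).2). Qed.

Lemma T_noarr k s : T k < s < T k.+1 -> ~ arrives D (cc k) s.
Proof. rewrite /T /cc /=. case: (nxt_spec (st k).1 (st k).2) => _ [H _]. exact: H. Qed.

Lemma T_event k :
  (comm D (cc k) (cc k.+1) /\ sched_pt D (cc k) (T k.+1) = link D (cc k) (cc k.+1)) \/
  (cc k.+1 = cc k /\ T k.+1 = T k + 1 /\ ~ arrives D (cc k) (T k.+1)).
Proof.
rewrite /T /cc /=. case: (nxt_spec (st k).1 (st k).2) => _ [_ [H|[H1 [H2 H3]]]].
by left. right; split=>//; split=>//. by rewrite H2.
Qed.

Lemma T_le (k m : nat) : (k <= m)%nat -> T k <= T m.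
Proof.
elim: m => [|m IH]; first by rewrite leqn0 => /eqP ->; lra.
rewrite leq_eqVlt => /orP [/eqP ->|Hk]; first lra.
have := IH Hk. have := T_step m. lra.
Qed.

Lemma T_lt (k m : nat) : (k < m)%nat -> T k < T m.
Proof. move=> H. have := T_step k. have := T_le H. lra. Qed.

Lemma T_window k : T k + 1 <= T (k + (n * n)%nat.+1)%nat.
Proof.
apply: Rnot_lt_le => Hc.
set N := (n * n)%nat.+1 in Hc.
pose f := fun i : 'I_N => (cc (k + i)%nat, cc (k + i)%nat.+1).
have key : forall a b : nat, (a < b)%nat -> (b < N)%nat -> (cc (k + a)%nat, cc (k + a)%nat.+1) = (cc (k + b)%nat, cc (k + b)%nat.+1) -> False.
  move=> a b Hab HbN /= [E1 E2].
  have Hb1 : T (k + b)%nat.+1 <= T (k + N)%nat by apply T_le; rewrite -addnS leq_add2l.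
  have Ha0 : T k <= T (k + a)%nat by apply T_le; rewrite leq_addr.
  have Ha1 : T (k + a)%nat < T (k + a)%nat.+1 := T_step _.
  suff : T (k + a)%nat.+1 + 1 <= T (k + b)%nat.+1 by lra.
  case: (T_event (k + a)%nat) => [[Hca Hla]|[Ea [Eta Hna]]];
  case: (T_event (k + b)%nat) => [[Hcb Hlb]|[Eb [Etb Hnb]]].
  - rewrite -E1 -E2 in Hlb.
    apply: (arr_spacing HS Hla Hlb). apply T_lt. by rewrite ltnS ltn_add2l.
  - exfalso. rewrite -E1 -E2 in Eb. exact: (comm_neq HS Hca (esym Eb)).
  - exfalso. rewrite -E1 -E2 in Hcb. rewrite Ea in Hcb. exact: (comm_neq HS Hcb erefl).
  - rewrite Etb. have : T (k + a)%nat.+1 <= T (k + b)%nat by apply T_le; rewrite -addnS leq_add2l.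
    lra.
have finj : injective f.
  move=> i1 i2 E. apply/val_inj/eqP. case: (ltngtP i1 i2) => // H.
  - exfalso. apply: (key i1 i2 H (ltn_ord i2)). by rewrite /f in E; rewrite E.
  - exfalso. apply: (key i2 i1 H (ltn_ord i1)). by rewrite /f in E; rewrite E.
have := leq_card f finj. rewrite card_ord card_prod card_ord. by rewrite ltnn.
Qed.

Lemma T_mult m : INR m <= T (m * (n * n)%nat.+1)%nat.
Proof.
elim: m => [|m IH]; first by rewrite mul0n T0 /=; lra.
rewrite S_INR mulSn addnC. have := T_window (m * (n * n)%nat.+1)%nat. lra.
Qed.

Lemma T_unbounded t : exists k, t < T k.
Proof.
have [m Hm] := INR_unbounded t. exists (m * (n * n)%nat.+1)%nat. have := T_mult m. lra.
Qed.

Definition Pidx (t : R) (k : nat) : bool := if Rlt_dec t (T k.+1) then true else false.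

Lemma ex_idx t : exists k, Pidx t k.
Proof.
have [k Hk] := T_unbounded t. exists k. rewrite /Pidx. case: Rlt_dec => // H.
have := T_step k. lra.
Qed.

Definition Phi (t : R) : 'I_n := cc (ex_minn (ex_idx t)).

Lemma Phi_on k t : T k <= t < T k.+1 -> Phi t = cc k.
Proof.
move=> [H1 H2]. rewrite /Phi. case: ex_minnP => m Hm Hmin.
have Pk : Pidx t k by rewrite /Pidx; case: Rlt_dec.
have Hmk := Hmin k Pk.
case: (ltngtP m k) Hmk => // Hlt _; last by rewrite Hlt.
exfalso. move: Hm. rewrite /Pidx. case: Rlt_dec => // Ht _.
have : T m.+1 <= T k by apply T_le. lra.
Qed.

Lemma idx_ex t : 0 <= t -> exists k, T k <= t < T k.+1.
Proof.
move=> Ht. case: (ex_minnP (ex_idx t)) => m Hm Hmin. exists m.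
move: Hm. rewrite /Pidx. case: Rlt_dec => // Hlt _. split=> //.
case: m Hmin Hlt => [|m] Hmin Hlt; first by rewrite T0.
apply: Rnot_lt_le => Hc.
have : Pidx t m by rewrite /Pidx; case: Rlt_dec.
move/Hmin. by rewrite ltnn.
Qed.

Lemma Phi_rc t : 0 <= t -> exists d, 0 < d /\ forall t', t <= t' < t + d -> Phi t' = Phi t.
Proof.
move=> Ht. have [k Hk] := idx_ex Ht. exists (T k.+1 - t). split; first lra.
move=> t' Ht'. rewrite (Phi_on Hk) (Phi_on (k:=k)) //. lra.
Qed.

Lemma Phi_bcase t : 0 < t -> exists k, T k < t <= T k.+1.
Proof.
move=> Ht. have [k [Hk1 Hk2]] := idx_ex (Rlt_le _ _ Ht).
case: (Rle_lt_or_eq_dec _ _ Hk1) => H; first by exists k; lra.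
case: k Hk1 Hk2 H => [|k] Hk1 Hk2 H; first by rewrite T0 in H; lra.
exists k. have := T_step k. lra.
Qed.

Definition PhiF : 'I_n -> R -> 'I_n := fun _ => Phi.

Lemma Phi_before_ex t : 0 <= t -> exists c, before PhiF v t c.
Proof.
move=> Ht. case: (Rle_lt_or_eq_dec _ _ Ht) => H; last by exists v; left.
have [k Hk] := Phi_bcase H. exists (cc k). right. split=>//.
exists (t - T k). split; first lra. move=> t' Ht'. rewrite /PhiF (Phi_on (k:=k)) //. lra.
Qed.

Lemma Phi_before_char t c : before PhiF v t c ->
  (t = 0 /\ c = v) \/ (0 < t /\ exists k, T k < t <= T k.+1 /\ c = cc k).
Proof.
case=> [H|[Ht [d [Hd H]]]]; first by left.
right. split=>//. have [k Hk] := Phi_bcase Ht. exists k. split=>//.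
have h1 := Rmax_l (t - d) (T k). have h2 := Rmax_r (t - d) (T k).
have h3 : Rmax (t - d) (T k) < t by apply Rmax_lub_lt; lra.
move: h1 h2 h3. set m := Rmax (t - d) (T k) => h1 h2 h3.
rewrite -(H (m + (t - m) / 2)); last lra.
rewrite /PhiF (Phi_on (k:=k)) //. lra.
Qed.

Lemma Phi_step t c : 0 <= t -> before PhiF v t c ->
  (comm D c (Phi t) /\ sched_pt D c t = link D c (Phi t)) \/ (Phi t = c /\ ~ arrives D c t).
Proof.
move=> Ht /Phi_before_char [[-> ->]|[Ht' [k [Hk ->]]]].
- rewrite (Phi_on (k:=0)); last by rewrite T0; have := T_step 0; rewrite T0; lra.
  rewrite cc0. exact: c0_spec.
- case: (Rle_lt_or_eq_dec _ _ (proj2 Hk)) => H.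
  + right. rewrite (Phi_on (k:=k)); last lra. split=>//. apply: T_noarr. lra.
  + rewrite (Phi_on (k:=k.+1)); last by rewrite H; have := T_step k.+1; lra.
    case: (T_event k) => [[Hc Hl]|[E1 [E2 E3]]]; first by left; rewrite H.
    right. rewrite H. by split.
Qed.

End Phi.


Local Open Scope R_scope.

Section Inv.
Variable n : nat.
Variable D : scs_data n.
Hypothesis HS : is_SCS D.
Variable v : 'I_n.
Variable S : {set 'I_n}.
Variable pos : 'I_n -> R -> 'I_n.
Hypothesis Hex : execution D S pos.
Hypothesis Hv : alive S v.

Lemma exec_b t : 0 <= t -> exists b : 'I_n -> 'I_n,
  (forall r, alive S r -> before pos r t (b r)) /\ (forall r, alive S r -> step D S b r t (pos r t)).
Proof. case: Hex => _ H. exact: H. Qed.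

Lemma noevent w t c : 0 <= t -> alive S w -> before pos w t c -> ~ arrives D c t -> pos w t = c.
Proof.
move=> Ht Hw Hb Hna. have [b [Hb' Hst]] := exec_b Ht.
have Ebw := before_uniq (Hb' w Hw) Hb.
case: (Hst w Hw) => [[j [[Hc [Hl _]] _]]|[_ E]].
- exfalso; apply: Hna; exists j; by rewrite -Ebw.
- by rewrite E.
Qed.

Lemma event w t c j : 0 <= t -> alive S w -> before pos w t c -> comm D c j ->
  sched_pt D c t = link D c j -> exists w', alive S w' /\ pos w' t = j.
Proof.
move=> Ht Hw Hb Hc Hl. have [b [Hb' Hst]] := exec_b Ht.
have Ebw := before_uniq (Hb' w Hw) Hb.
case: (Hst w Hw) => [[j' [[Hc' [Hl' _]] E]]|[Hn _]].
- exists w; split=>//. rewrite E. rewrite Ebw in Hc' Hl'. apply: (link_inj HS Hc' Hc). by rewrite -Hl' -Hl.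
- have : ~ ~ exists r', alive S r' /\ r' <> w /\ b r' = j /\ sched_pt D j t = link D j (b w).
    move=> Hnn. apply: (Hn j). rewrite /shift_cond Ebw. rewrite Ebw in Hnn. by do 2 (split=>//).
  move/NNPP => [r' [Hr' [Hne [Ebr Hlr]]]].
  exists r'; split=>//. rewrite Ebw in Hlr.
  case: (Hst r' Hr') => [[j'' [[Hc'' [Hl'' Hno]] E]]|[_ E]]; last by rewrite E.
  exfalso. rewrite Ebr in Hc'' Hl'' Hno.
  have Ej : j'' = c.
    apply: (link_inj HS Hc'' (comm_sym HS Hc)). by rewrite -Hl'' -Hlr.
  rewrite Ej in Hno. apply: Hno. exists w. split=>//. split; first by move=> Ew; apply: Hne; rewrite Ew.
  by split.
Qed.

Lemma const w t0 t1 c : 0 <= t0 -> alive S w -> pos w t0 = c ->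
  (forall s, t0 < s < t1 -> ~ arrives D c s) -> forall t, t0 <= t < t1 -> pos w t = c.
Proof.
move=> Ht0 Hw Hc Hna. apply: real_ind.
- move=> t Ht IH. case: (Rle_lt_or_eq_dec _ _ (proj1 Ht)) => H; last by rewrite -H.
  have [b [Hb' _]] := exec_b (t:=t) ltac:(lra).
  case: (Hb' w Hw) => [[E _]|[_ [d [Hd Hdd]]]]; first lra.
  have Hbc : b w = c.
    have h1 := Rmax_l (t - d) t0. have h2 := Rmax_r (t - d) t0.
    have h3 : Rmax (t - d) t0 < t by apply Rmax_lub_lt; lra.
    move: h1 h2 h3. set m := Rmax (t - d) t0 => h1 h2 h3.
    rewrite -(Hdd (m + (t - m) / 2)); last lra. apply IH. lra.
  apply: (noevent (t:=t) (w:=w)); [lra | exact Hw | rewrite -Hbc; exact: Hb' | apply Hna; lra].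
- move=> t Ht Hp. case: Hex => Hrc _. have [d [Hd Hdd]] := Hrc w Hw t ltac:(lra).
  exists d; split=>//. move=> t' Ht'. by rewrite Hdd.
Qed.

Lemma T_nonneg k : 0 <= T HS v k.
Proof. have := T_le HS v (leq0n k). rewrite T0. lra. Qed.

Lemma claim_interval k w : alive S w -> pos w (T HS v k) = cc HS v k ->
  forall t, T HS v k <= t < T HS v k.+1 -> pos w t = cc HS v k.
Proof.
move=> Hw E. apply: (const (t0:=T HS v k)) => //. exact: T_nonneg.
move=> s Hs. exact: T_noarr.
Qed.

Lemma claim_pt k : exists w, alive S w /\ pos w (T HS v k) = cc HS v k.
Proof.
elim: k => [|k [w [Hw E]]].
- case: (c0_spec D v) => [[Hc Hl]|[E Hna]].
  + have Hb0 : before pos v 0 v by left.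
    have [w' [Hw' E]] := event (Rle_refl 0) Hv Hb0 Hc Hl.
    exists w'; split=>//.
  + exists v; split=>//. rewrite T0 cc0 E. apply: noevent => //. lra. by left.
- have Hi := claim_interval Hw E.
  have Hst := T_step HS v k. have Hnn := T_nonneg k.
  have Hb : before pos w (T HS v k.+1) (cc HS v k).
    right. split; first lra. exists (T HS v k.+1 - T HS v k). split; first lra.
    move=> t' Ht'. apply Hi. lra.
  case: (T_event HS v k) => [[Hc Hl]|[E1 [E2 E3]]].
  + apply: (event (t:=T HS v k.+1) _ Hw Hb Hc Hl). lra.
  + exists w; split=>//. rewrite E1. apply: noevent => //. lra.
Qed.

Lemma Inv t c : 0 <= t -> before (PhiF HS v) v t c -> exists w, alive S w /\ before pos w t c.
Proof.
move=> Ht /Phi_before_char [[-> ->]|[Htp [k [Hk ->]]]].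
- exists v; split=>//. by left.
- have [w [Hw E]] := claim_pt k. exists w; split=>//.
  right; split=>//. exists (t - T HS v k). split; first lra.
  move=> t' Ht'. apply: (claim_interval Hw E). lra.
Qed.

End Inv.


Local Open Scope R_scope.

Lemma before_congr n (f g : 'I_n -> R -> 'I_n) r t c :
  (forall t', f r t' = g r t') -> before f r t c -> before g r t c.
Proof.
move=> E [H|[Ht [d [Hd H]]]]; first by left.
right; split=>//; exists d; split=>// t' Ht'; by rewrite -E H.
Qed.

Lemma key n (D : scs_data n) (HS : is_SCS D) (s : nat) (Hsn : is_starvation_number D s)
  S pos (K : {set 'I_n}) (Hex : execution D S pos) (HK : forall r, r \in K -> starves D S pos r)
  (HKs : (s <= #|K|)%nat) v (Hv : alive S v) (HvK : v \notin K) : False.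
Proof.
pose K' := v |: K. pose S' := ~: K'.
pose pos' := fun r => if r == v then Phi HS v else pos r.
have HaS' : forall r, alive S' r <-> r \in K'.
  move=> r. rewrite /alive /S' in_setC negbK. by [].
have HKa : forall r, r \in K -> alive S r by move=> r /HK [].
have HinK : forall r, alive S' r -> r != v -> r \in K.
  move=> r /HaS'. rewrite in_setU1 => /orP [/eqP ->|//]; by rewrite eqxx.
have Hpv : forall t, pos' v t = Phi HS v t by move=> t; rewrite /pos' eqxx.
have Hpr : forall r t, r != v -> pos' r t = pos r t by move=> r t Hr; rewrite /pos' (negbTE Hr).
have Bv1 : forall t c, before pos' v t c -> before (PhiF HS v) v t c.
  move=> t c. apply: before_congr => t'. by rewrite Hpv.
have Bv2 : forall t c, before (PhiF HS v) v t c -> before pos' v t c.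
  move=> t c. apply: before_congr => t'. by rewrite Hpv.
have Br1 : forall r t c, r != v -> before pos' r t c -> before pos r t c.
  move=> r t c Hr. apply: before_congr => t'. by rewrite Hpr.
have Br2 : forall r t c, r != v -> before pos r t c -> before pos' r t c.
  move=> r t c Hr. apply: before_congr => t'. by rewrite Hpr.
have Hexec : execution D S' pos'.
  split.
  - move=> r Hr t Ht. case: (eqVneq r v) => [->|Hne].
    + have [d [Hd H]] := Phi_rc HS v Ht. exists d; split=>// t' Ht'. rewrite !Hpv. exact: H.
    + case: Hex => Hrc _. have [d [Hd H]] := Hrc r (HKa r (HinK r Hr Hne)) t Ht.
      exists d; split=>// t' Ht'. rewrite !Hpr //. exact: H.
  - move=> t Ht. have [b [Hb Hst]] := exec_b Hex Ht.
    have [cP HcP] := Phi_before_ex HS v Ht.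
    have [b' [Hb'v Hb'r]] : exists b' : 'I_n -> 'I_n, b' v = cP /\ forall r, r != v -> b' r = b r.
      exists (fun r => if r == v then cP else b r). by rewrite eqxx; split=>// r Hr; rewrite (negbTE Hr).
    exists b'. split.
    + move=> r Hr. case: (eqVneq r v) => [->|Hne].
      * rewrite Hb'v. exact: Bv2.
      * rewrite Hb'r //. apply: Br2 => //. apply: Hb. exact: HKa (HinK r Hr Hne).
    + move=> r Hr. case: (eqVneq r v) => [->|Hne].
      * rewrite Hpv. case: (Phi_step Ht HcP) => [[Hc Hl]|[E Hna]].
        -- left. exists (Phi HS v t). split=>//. rewrite /shift_cond Hb'v. split=>//. split=>//.
           move=> [r' [Hr' [Hne' [Hbr' Hlr']]]].
           have Hr'K := HinK r' Hr' (introN eqP Hne').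
           rewrite Hb'r in Hbr'; last exact: (introN eqP Hne').
           have [w [Hw Hbw]] := Inv Hex Hv Ht HcP.
           have Hb'' : before pos r' t (Phi HS v t) by rewrite -Hbr'; apply: Hb; exact: HKa.
           have Hwr : w <> r'.
             move=> Ew. subst w. have := before_uniq Hbw Hb''. exact: (comm_neq HS Hc).
           case: (HK r' Hr'K) => _ Hst'.
           apply: (Hst' t Ht (Phi HS v t) cP w Hb'' (comm_sym HS Hc) Hlr' Hw Hwr Hbw). exact: Hl.
        -- right. split; last by rewrite Hb'v E.
           move=> j [Hc [Hl _]]. apply: Hna. exists j. by rewrite -Hb'v.
      * have HrK := HinK r Hr Hne. have HrS := HKa r HrK.
        have Equiv : forall j, shift_cond D S b r t j <-> shift_cond D S' b' r t j.
          move=> j. rewrite /shift_cond (Hb'r r Hne). split.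
          - move=> [Hc [Hl Hno]]. split=>//. split=>//.
            move=> [r' [Hr' [Hne' [Hbr' Hlr']]]]. case: (eqVneq r' v) => [Ev|Hnv].
            + subst r'. rewrite Hb'v in Hbr'.
              have [w [Hw Hbw]] := Inv Hex Hv Ht HcP.
              have Ebw := before_uniq (Hb w Hw) Hbw. rewrite Hbr' in Ebw.
              apply: Hno. exists w. split=>//. split.
              * move=> Ew. subst w. rewrite Ebw in Hc. exact: (comm_neq HS Hc erefl).
              * by split.
            + rewrite Hb'r // in Hbr'. apply: Hno. exists r'. split; first exact: HKa (HinK r' Hr' Hnv).
              by split.
          - move=> [Hc [Hl Hno]]. split=>//. split=>//.
            move=> [r' [Hr' [Hne' [Hbr' Hlr']]]].
            case: (HK r HrK) => _ Hst'.
            have Hb2 : before pos r' t j by rewrite -Hbr'; exact: Hb.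
            exact: (Hst' t Ht (b r) j r' (Hb r HrS) Hc Hl Hr' Hne' Hb2 Hlr').
        rewrite Hpr //. case: (Hst r HrS) => [[j [Hsc E]]|[Hn E]].
        -- left. exists j. split=>//. exact/Equiv.
        -- right. split; last by rewrite Hb'r.
           move=> j /Equiv. exact: Hn.
have Hstarve : forall r, r \in K' -> starves D S' pos' r.
  move=> r HrK'. split; first by apply/HaS'.
  move=> t Ht i j r' Hbi Hc Hl Hr' Hne' Hbj.
  case: (eqVneq r v) => [Ev|Hnv].
  - subst r. have Hr'K := HinK r' Hr' (introN eqP Hne').
    have [w [Hw Hbw]] := Inv Hex Hv Ht (Bv1 _ _ Hbi).
    have Hbj' := Br1 _ _ _ (introN eqP Hne') Hbj.
    have Hwr : w <> r'.
      move=> Ew. subst w. have := before_uniq Hbw Hbj'. exact: (comm_neq HS Hc).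
    move=> Hcontra. case: (HK r' Hr'K) => _ Hst'.
    exact: (Hst' t Ht j i w Hbj' (comm_sym HS Hc) Hcontra Hw Hwr Hbw Hl).
  - have HrK : r \in K by move: HrK'; rewrite in_setU1 (negbTE Hnv).
    have Hbi' := Br1 _ _ _ Hnv Hbi.
    case: (HK r HrK) => _ Hst'.
    case: (eqVneq r' v) => [Ev|Hnv'].
    + subst r'. have [w [Hw Hbw]] := Inv Hex Hv Ht (Bv1 _ _ Hbj).
      have Hwr : w <> r.
        move=> Ew. subst w. have := before_uniq Hbi' Hbw. exact: (comm_neq HS Hc).
      exact: (Hst' t Ht i j w Hbi' Hc Hl Hw Hwr Hbw).
    + have Hbj' := Br1 _ _ _ Hnv' Hbj.
      exact: (Hst' t Ht i j r' Hbi' Hc Hl (HKa r' (HinK r' Hr' Hnv')) Hne' Hbj').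
case: Hsn => _ Hbound.
have := Hbound S' pos' K' Hexec Hstarve.
rewrite cardsU1 HvK /=. move=> H. have := leq_trans H HKs. by rewrite ltnn.
Qed.

Local Close Scope R_scope.

Theorem lemma3 (n : nat) (D : scs_data n) (s : nat) :
  (0 < n)%N -> is_SCS D -> is_starvation_number D s ->
  is_resilience D s (n - s).
Proof.
move=> _ HS Hsn.
have Hall : forall S pos (K : {set 'I_n}), execution D S pos -> (s <= #|K|)%nat ->
    (forall r, r \in K -> starves D S pos r) -> ~: S = K.
  move=> S pos K Hex HKs HK. apply/setP => r. rewrite in_setC.
  apply/idP/idP => [Hr|HrK].
  - apply/negPn/negP => HrK. exact: (key HS Hsn Hex HK HKs Hr HrK).
  - by case: (HK r HrK).
have Hsum : forall S : {set 'I_n}, (#|S| + #|~: S|)%nat = n by move=> S; rewrite cardsC card_ord.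
split.
- case: (Hsn) => [[S0 [pos0 [K0 [Hex [Hcard HK]]]]] _].
  exists S0, pos0, K0. split; last split=>//; last split=>//; last by rewrite Hcard.
  have E := Hall S0 pos0 K0 Hex ltac:(by rewrite Hcard) HK.
  have H := Hsum S0. rewrite E Hcard in H.
  move: H => /(congr1 (fun x => x - s)%nat). by rewrite addnK.
- move=> S pos K Hex HKs HK.
  have E := Hall S pos K Hex HKs HK.
  case: Hsn => _ Hb. have HK' := Hb S pos K Hex HK.
  have H := Hsum S. rewrite E in H.
  apply: (@leq_trans (#|S| + #|K| - s)%nat); first by rewrite H.
  by rewrite leq_subLR addnC leq_add2r.
Qed.
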